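(* Let $m\ge 38$ be even and let $G$ be a graph with maximum spectral radius among all $H(4,3)$-free graphs with $m$ edges and no isolated vertices. Let $\mathbf{x}$ be the Perron vector of $G$, $u^*$ a vertex maximizing $x_{u^*}$, $N = N(u^* )$, and $A_+ = \{v\in N : d_N(v)\ge 1\}$. Then $G[A_+]$ is isomorphic to a star $K_{1,t}$ for some $t\ge 1$.
   Context: All graphs are simple and undirected; $\rho(G)$ is the largest adjacency eigenvalue and the Perron vector is the positive unit eigenvector for $\rho(G)$ (the extremal $G$ is connected). $H(4,3)$ is the graph formed by a cycle of length $4$ and a triangle sharing exactly one common vertex. $N(v)$ denotes the neighbourhood of $v$, $d_S(v)=|N(v)\cap S|$, and $G[S]$ is the subgraph induced by $S$. *)

(* Defs.v *)
From HB Require Import structures.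
From mathcomp Require Import all_boot all_order all_algebra.
From mathcomp Require Import reals.
Set Implicit Arguments. Unset Strict Implicit. Unset Printing Implicit Defensive.
Import Order.TTheory GRing.Theory Num.Theory.
Local Open Scope ring_scope.

Definition simple_graph (n : nat) (e : rel 'I_n) : Prop :=
  symmetric e /\ irreflexive e.

Definition num_edges (n : nat) (e : rel 'I_n) : nat :=
  #|[set p : 'I_n * 'I_n | e p.1 p.2 && (p.1 < p.2)%N]|.

Definition no_isolated (n : nat) (e : rel 'I_n) : Prop :=
  forall v : 'I_n, exists u : 'I_n, e v u.

(* H(4,3): a 4-cycle 0-1-2-3-0 and a triangle 0-4-5-0 sharing vertex 0. *)
Definition H43_edge_list : seq (nat * nat) :=
  [:: (0,1); (1,2); (2,3); (3,0); (0,4); (4,5); (5,0)]%N.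
Definition H43 : rel 'I_6 := fun i j =>
  ((nat_of_ord i, nat_of_ord j) \in H43_edge_list) ||
  ((nat_of_ord j, nat_of_ord i) \in H43_edge_list).

Definition contains_H43 (n : nat) (e : rel 'I_n) : Prop :=
  exists f : 'I_6 -> 'I_n, injective f /\ forall i j, H43 i j -> e (f i) (f j).

Definition H43_free (n : nat) (e : rel 'I_n) : Prop := ~ contains_H43 e.

Definition adj_mx (R : nzRingType) (n : nat) (e : rel 'I_n) : 'M[R]_n :=
  \matrix_(i, j) (e i j)%:R.

Definition spectral_radius (R : realType) (n : nat) (e : rel 'I_n) (r : R) : Prop :=
  eigenvalue (adj_mx R e) r /\ forall a : R, eigenvalue (adj_mx R e) a -> a <= r.

Definition admissible (m n : nat) (e : rel 'I_n) : Prop :=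
  [/\ simple_graph e, H43_free e, num_edges e = m & no_isolated e].

Definition extremal (R : realType) (m n : nat) (e : rel 'I_n) : Prop :=
  admissible m e /\
  exists r : R, spectral_radius e r /\
    forall (n' : nat) (e' : rel 'I_n') (r' : R),
      admissible m e' -> spectral_radius e' r' -> r' <= r.

Definition perron_vector (R : realType) (n : nat) (e : rel 'I_n) (x : 'cV[R]_n) : Prop :=
  exists r : R, [/\ spectral_radius e r, adj_mx R e *m x = r *: x,
                    (forall i, 0 < x i 0) & \sum_i (x i 0) ^+ 2 = 1].

Definition nbhd (n : nat) (e : rel 'I_n) (u : 'I_n) : {set 'I_n} := [set v | e u v].

Definition A_plus (n : nat) (e : rel 'I_n) (u : 'I_n) : {set 'I_n} :=
  [set v in nbhd e u | (0 < #|[set w in nbhd e u | e v w]|)%N].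

(* star K_{1,t} on 'I_t.+1 with center 0 *)
Definition star_rel (t : nat) : rel 'I_t.+1 :=
  fun i j => (nat_of_ord i == 0%N) != (nat_of_ord j == 0%N).

Definition induced_iso (n : nat) (e : rel 'I_n) (S : {set 'I_n}) (k : nat) (h : rel 'I_k) : Prop :=
  exists f : 'I_k -> 'I_n,
    [/\ injective f, forall v, v \in S <-> exists i, f i = v
      & forall i j, e (f i) (f j) = h i j].

(* Main.v *)
Require Import Defs.
From HB Require Import structures.
From mathcomp Require Import all_boot all_order all_algebra.
From mathcomp Require Import reals.
From mathcomp Require Import ring lra zify.
From Stdlib Require Import Classical_Prop.
Set Implicit Arguments. Unset Strict Implicit. Unset Printing Implicit Defensive.
Import Order.TTheory GRing.Theory Num.Theory.

Lemma sum_ind (T : finType) (P : pred T) : (\sum_i (P i : nat))%N = #|P|.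
Proof.
rewrite -sum1_card [RHS]big_mkcond /=; apply: eq_bigr => i _.
by rewrite unfold_in; case: (P i).
Qed.

Lemma H43_of (n : nat) (e : rel 'I_n) (esym : symmetric e) (c p1 p2 p3 q1 q2 : 'I_n) :
  uniq [:: c; p1; p2; p3; q1; q2] ->
  e c p1 -> e p1 p2 -> e p2 p3 -> e p3 c -> e c q1 -> e q1 q2 -> e q2 c ->
  contains_H43 e.
Proof.
move=> U h1 h2 h3 h4 h5 h6 h7.
exists (fun i : 'I_6 => nth c [:: c; p1; p2; p3; q1; q2] i); split.
  move=> i j /eqP; rewrite (@nth_uniq _ c [:: c; p1; p2; p3; q1; q2] i j (ltn_ord i) (ltn_ord j) U).
  by move/eqP/val_inj.
move=> [[|[|[|[|[|[|i]]]]]] Hi] [[|[|[|[|[|[|j]]]]]] Hj] //=;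
  rewrite /H43 /= ?eqxx //= ?(esym c) ?(esym p1) ?(esym p2) ?(esym p3) ?(esym q1) //.
all: by move=> _; rewrite esym.
Qed.

Section GraphBasics.
Variables (n : nat) (e : rel 'I_n).
Hypotheses (esym : symmetric e) (eirr : irreflexive e).

Lemma handshake : (\sum_i #|[set j | e i j]|)%N = (2 * num_edges e)%N.
Proof.
have -> : (\sum_i #|[set j | e i j]| = \sum_i \sum_j (e i j : nat))%N.
  by apply: eq_bigr => i _; rewrite cardsE -sum_ind.
have -> : (num_edges e = \sum_i \sum_j (e i j && (i < j)%N : nat))%N.
  by rewrite /num_edges cardsE -sum_ind pair_bigA.
have E1 : (\sum_i \sum_j (e i j : nat) = \sum_i \sum_j (e i j && (i < j)%N : nat)
          + \sum_i \sum_j (e i j && (j < i)%N : nat))%N.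
  rewrite -big_split /=; apply: eq_bigr => i _; rewrite -big_split /=.
  apply: eq_bigr => j _; case: (ltngtP i j) => [h|h|h]; rewrite ?andbT ?andbF ?addn0 //.
  have -> : i = j by apply: val_inj.
  by rewrite eirr.
rewrite E1 mul2n -addnn; congr (_ + _)%N.
rewrite exchange_big /=; apply: eq_bigr => i _; apply: eq_bigr => j _.
by rewrite esym.
Qed.
End GraphBasics.

Section CW.
Local Open Scope ring_scope.
Lemma cw_bound (R : realType) n (e : rel 'I_n) (esym : symmetric e)
   (w : 'I_n -> R) (lam mu : R) :
  (forall i, 0 < w i) -> (forall i, \sum_j (e i j)%:R * w j <= lam * w i) ->
  eigenvalue (adj_mx R e) mu -> mu <= lam.
Proof.
move=> wpos Hw /eigenvalueP [v Hv vn0].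
have [i0 Hi0] : exists i, v 0 i != 0.
  apply/existsP; apply: contraR vn0 => /existsPn H; apply/eqP/rowP => i.
  by rewrite !mxE; apply/eqP; have := H i; rewrite negbK.
set F := fun j => `|v 0 j| / w j.
case: (@arg_maxP _ R 'I_n i0 xpredT F isT) => j _ Hj.
set c := F j.
have cpos : 0 < c.
  apply: (lt_le_trans _ (Hj i0 isT)); rewrite /F divr_gt0 ?normr_gt0 //.
have Hvj : `|v 0 j| = c * w j by rewrite /c /F mulrVK // unitfE gt_eqF.
have Hvle : forall i, `|v 0 i| <= c * w i.
  move=> i; have := Hj i isT; rewrite /= -/c /F /= ler_pdivrMr //.
have E : mu * v 0 j = \sum_i v 0 i * (e i j)%:R.
  have := congr1 (fun M : 'rV[R]_n => M 0 j) Hv; rewrite !mxE => <-.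
  by apply: eq_bigr => i _; rewrite mxE.
have H1 : `|mu| * `|v 0 j| <= lam * `|v 0 j|.
  rewrite -normrM E.
  apply: (le_trans (ler_norm_sum _ _ _)).
  apply: (@le_trans _ _ (\sum_i c * ((e j i)%:R * w i))).
    apply: ler_sum => i _; rewrite normrM normr_nat (esym i j) mulrC mulrCA.
    by rewrite ler_wpM2l ?ler0n.
  by rewrite -mulr_sumr Hvj mulrCA ler_wpM2l ?(ltW cpos).
have vjpos : 0 < `|v 0 j| by rewrite Hvj mulr_gt0.
rewrite ler_pM2r // in H1.
exact: le_trans (ler_norm _) H1.
Qed.

End CW.

Definition bkn (t i j : nat) : bool :=
  [|| (i == 0) && (1 <= j <= t.+1), (j == 0) && (1 <= i <= t.+1),
      (i == 1) && (2 <= j <= t.+1), (j == 1) && (2 <= i <= t.+1),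
      (i == t.+2) && (j == t.+3) | (i == t.+3) && (j == t.+2)].
Lemma bkn_sym t i j : bkn t i j = bkn t j i.
Proof. rewrite /bkn; apply/idP/idP; lia. Qed.
Lemma bkn_irr t i : bkn t i i = false.
Proof. rewrite /bkn; apply/negbTE; lia. Qed.
Lemma bkn_deg3 t y a b c : bkn t y a -> bkn t y b -> bkn t y c -> a != b -> a != c -> b != c -> y <= 1.
Proof. rewrite /bkn; lia. Qed.
Lemma L1 t f0 f4 f5 : f0 <= 1 -> bkn t f0 f4 -> bkn t f0 f5 -> bkn t f4 f5 -> f4 != f0 -> f5 != f0 -> (f4 <= 1) || (f5 <= 1).
Proof. rewrite /bkn; lia. Qed.
Lemma LB t f0 f1 : f0 <= 1 -> bkn t f0 f1 -> f1 <= t.+1.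
Proof. rewrite /bkn; lia. Qed.
Lemma LC t f1 f2 : 2 <= f1 <= t.+1 -> bkn t f1 f2 -> f2 <= 1.
Proof. rewrite /bkn; lia. Qed.
Lemma L2 t f0 f1 f2 f4 f5 : f0 <= 1 -> (f4 <= 1) || (f5 <= 1) -> bkn t f0 f1 -> bkn t f1 f2 ->
  f0 != f2 -> f0 != f4 -> f0 != f5 -> f1 != f4 -> f1 != f5 -> f2 != f4 -> f2 != f5 -> f0 != f1 -> f1 != f2 -> False.
Proof.
move=> h0 h45 e01 e12 d02 d04 d05 d14 d15 d24 d25 d01 d12.
have hb := @LB t f0 f1 h0 e01.
have h1 : 2 <= f1 by move: h0 h45 d04 d05 d14 d15 d01; lia.
have h2 : f2 <= 1 by apply: (@LC t f1 f2) => //; rewrite h1 hb.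
move: h0 h45 h2 d02 d04 d05 d24 d25; lia.
Qed.

Lemma bkn_free t f0 f1 f2 f3 f4 f5 :
  f0 != f1 -> f0 != f2 -> f0 != f3 -> f0 != f4 -> f0 != f5 ->
  f1 != f2 -> f1 != f3 -> f1 != f4 -> f1 != f5 -> f2 != f3 -> f2 != f4 -> f2 != f5 ->
  f3 != f4 -> f3 != f5 -> f4 != f5 ->
  bkn t f0 f1 -> bkn t f1 f2 -> bkn t f2 f3 -> bkn t f3 f0 -> bkn t f0 f4 -> bkn t f4 f5 ->
  bkn t f5 f0 -> False.
Proof.
move=> d01 d02 d03 d04 d05 d12 d13 d14 d15 d23 d24 d25 d34 d35 d45 e01 e12 e23 e30 e04 e45 e50.
have e03 : bkn t f0 f3 by rewrite bkn_sym.
have e05 : bkn t f0 f5 by rewrite bkn_sym.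
have h0 : f0 <= 1 by apply: (bkn_deg3 e01 e03 e04).
have h45 : (f4 <= 1) || (f5 <= 1).
  by apply: (@L1 t f0 f4 f5) => //; rewrite eq_sym.
exact: (@L2 t f0 f1 f2 f4 f5).
Qed.

Definition bk (t : nat) : rel 'I_t.+4 := fun i j => bkn t i j.
Arguments bk : clear implicits.

Lemma bk_sym (t : nat) : symmetric (bk t). Proof. by move=> i j; rewrite /bk bkn_sym. Qed.
Lemma bk_irr (t : nat) : irreflexive (bk t). Proof. by move=> i; rewrite /bk bkn_irr. Qed.

Lemma bk_free (t : nat) : H43_free (bk t).
Proof.
move=> [f [finj fe]].
pose o (k : nat) (h : (k < 6)%N) := Ordinal h.
have E k l (hk : (k < 6)%N) (hl : (l < 6)%N) : H43 (o k hk) (o l hl) -> bkn t (f (o k hk)) (f (o l hl)).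
  by move=> h; apply: fe.
have D k l (hk : (k < 6)%N) (hl : (l < 6)%N) : k != l -> (val (f (o k hk)) != val (f (o l hl))).
  move=> kl; apply/negP => /eqP /val_inj /finj /(congr1 val) /= /eqP; by rewrite (negbTE kl).
apply: (@bkn_free t (f (o 0 isT)) (f (o 1 isT)) (f (o 2 isT)) (f (o 3 isT)) (f (o 4 isT)) (f (o 5 isT)));
  (try by apply: D); by apply: E.
Qed.

Lemma bk_noiso (t : nat) : no_isolated (bk t).
Proof.
move=> v; have hv := ltn_ord v.
case: (eqVneq (v : nat) 0) => [v0|v0].
  by exists (inord 1); rewrite /bk inordK // v0.
case: (boolP (nat_of_ord v <= t.+1)) => v1.
  by exists (inord 0); rewrite /bk inordK //; move: v0 v1; rewrite /bkn; lia.
case: (eqVneq (v : nat) t.+2) => [v2|v2].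
  by exists (inord t.+3); rewrite /bk inordK // v2 /bkn; lia.
exists (inord t.+2); rewrite /bk inordK //; move: v0 v1 v2 hv; rewrite /bkn; lia.
Qed.

Lemma split5N t (F : nat -> nat) :
  (\sum_(i < t.+4) F i = F 0 + F 1 + \sum_(2 <= i < t.+2) F i + F t.+2 + F t.+3)%N.
Proof.
rewrite -(big_mkord xpredT F) big_ltn // big_ltn // big_nat_recr //= big_nat_recr //=.
by rewrite !addnA.
Qed.

Lemma mid_sumN t (F : nat -> nat) k :
  (forall j, (2 <= j < t.+2)%N -> F j = k) -> (\sum_(2 <= j < t.+2) F j = t * k)%N.
Proof.
move=> h; rewrite (eq_big_nat _ _ h) sum_nat_const_nat.
by have -> : (t.+2 - 2 = t)%N by lia.
Qed.

Definition degN t (i : nat) : nat := (\sum_(j < t.+4) bkn t i j)%N.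

Lemma degN_val t i : (i < t.+4)%N ->
  degN t i = if (i <= 1)%N then t.+1 else if (i <= t.+1)%N then 2 else 1.
Proof.
move=> hi; rewrite /degN (split5N t (fun j => bkn t i j : nat)) /=.
case: (boolP (i <= 1)%N) => h1.
  rewrite (@mid_sumN t _ 1); last by move=> j hj; move: h1 hj; rewrite /bkn; case: (bkn t i j); lia.
  by move: h1; rewrite /bkn; lia.
case: (boolP (i <= t.+1)%N) => h2.
  rewrite (@mid_sumN t _ 0); last by move=> j hj; move: h1 h2 hj; rewrite /bkn; lia.
  by move: h1 h2; rewrite /bkn; lia.
rewrite (@mid_sumN t _ 0); last by move=> j hj; move: h1 h2 hj hi; rewrite /bkn; lia.
by move: h1 h2 hi; rewrite /bkn; lia.
Qed.

Section SpectralS.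
Local Open Scope ring_scope.
Section Spectral.
Variable R : realType.
Variables (n : nat) (e : rel 'I_n) (u : 'I_n) (x : 'I_n -> R) (r : R) (m : nat).
Hypotheses (esym : symmetric e) (eirr : irreflexive e).
Hypotheses (xpos : forall i, 0 < x i) (xmax : forall i, x i <= x u).
Hypothesis eig : forall i, r * x i = \sum_j (e i j)%:R * x j.
Hypothesis hs : (\sum_i #|[set j | e i j]|)%N = (2 * m)%N.
Hypothesis hr : m%:R - 2 <= r ^+ 2 - r.
Hypothesis hr6 : 13%:R / 2 < r.

Definition adj (i j : 'I_n) : R := (e i j)%:R.
Definition wI (z : 'I_n) : R := ((z != u) && ~~ e u z)%:R.
Definition cNs (z : 'I_n) : nat := #|[set w in nbhd e u | e z w]|.
Definition cc (z : 'I_n) : R := \sum_y adj u y * adj z y.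
Definition kk (z : 'I_n) : R := \sum_y adj z y * wI y.
Definition dg (z : 'I_n) : R := \sum_y adj z y.

Lemma a_sym i j : adj i j = adj j i. Proof. by rewrite /adj esym. Qed.
Lemma a_irr i : adj i i = 0. Proof. by rewrite /adj eirr. Qed.
Lemma a_ge0 i j : 0 <= adj i j. Proof. by rewrite /adj ler0n. Qed.
Lemma a_le1 i j : adj i j <= 1. Proof. by rewrite /adj; case: (e i j). Qed.
Lemma wI_ge0 i : 0 <= wI i. Proof. by rewrite /wI ler0n. Qed.

Lemma cc_nat z : cc z = (cNs z)%:R.
Proof.
rewrite /cNs /cc cardsE -sum_ind natr_sum; apply: eq_bigr => y _.
by rewrite /adj /nbhd inE; case: (e u y); case: (e z y); rewrite /= ?mulr0 ?mulr1 ?mul0r.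
Qed.
Lemma cc_ge0 z : 0 <= cc z. Proof. by rewrite cc_nat ler0n. Qed.

Lemma part (F : 'I_n -> R) :
  \sum_z F z = F u + \sum_z adj u z * F z + \sum_z wI z * F z.
Proof.
have H z : F z = (z == u)%:R * F z + adj u z * F z + wI z * F z.
  rewrite /adj /wI; case: (eqVneq z u) => [->|nzu]; first by rewrite eirr /= mul1r !mul0r !addr0.
  by case: (e u z); rewrite /=; lra.
rewrite [LHS](eq_bigr _ (fun z _ => H z)) !big_split /=; congr (_ + _ + _).
rewrite (bigD1 u) //= eqxx mul1r big1 ?addr0 // => z /negbTE ->; by rewrite mul0r.
Qed.

Lemma dg_split z : dg z = adj z u + cc z + kk z.
Proof.
rewrite /dg part /cc /kk; congr (_ + _ + _); apply: eq_bigr => y _; by rewrite mulrC.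
Qed.

Let M := x u.
Let d := \sum_v adj u v.
Let CN := \sum_v adj u v * cc v.
Let K := \sum_w wI w * cc w.
Let D := \sum_w wI w * kk w.

Lemma a_idem i j : adj i j * adj i j = adj i j.
Proof. by rewrite /adj; case: (e i j); rewrite ?mulr0 ?mulr1. Qed.

Lemma sumN_kk : \sum_v adj u v * kk v = K.
Proof.
rewrite /K /kk /cc.
under eq_bigr do rewrite mulr_sumr.
rewrite exchange_big /=; apply: eq_bigr => y _.
rewrite mulr_sumr; apply: eq_bigr => v _.
by rewrite (a_sym y v); ring.
Qed.

Lemma M1 : (2 * m)%:R = 2 * d + CN + 2 * K + D.
Proof.
have -> : (2 * m)%:R = \sum_z dg z.
  rewrite -hs natr_sum; apply: eq_bigr => z _.
  by rewrite /dg cardsE -sum_ind natr_sum.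
rewrite part.
have -> : dg u = d by [].
have -> : \sum_z adj u z * dg z = d + CN + K.
  rewrite -sumN_kk /CN /d -!big_split /=; apply: eq_bigr => v _.
  rewrite dg_split (a_sym v u) /adj; case: (e u v); rewrite /=; ring.
have -> : \sum_z wI z * dg z = K + D.
  rewrite /K /D -big_split /=; apply: eq_bigr => w _.
  rewrite dg_split /wI (a_sym w u) /adj; case: (w != u); case: (e u w); rewrite /=; ring.
ring.
Qed.

Lemma E1 : r * M = \sum_v adj u v * x v.
Proof. by rewrite /M eig. Qed.

Lemma E2 : r ^+ 2 * M = \sum_z cc z * x z.
Proof.
rewrite expr2 -mulrA E1 mulr_sumr.
under eq_bigr do rewrite mulrCA eig mulr_sumr.
rewrite exchange_big /=; apply: eq_bigr => z _.
rewrite /cc mulr_suml; apply: eq_bigr => v _.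
by rewrite (a_sym z v); ring.
Qed.

Let al := \sum_v adj u v * (cc v * x v).
Let be := \sum_w wI w * (cc w * x w).

Lemma cc_u : cc u = d.
Proof. by rewrite /cc /d; apply: eq_bigr => y _; rewrite (a_sym u y) a_idem. Qed.

Lemma E2s : r ^+ 2 * M = d * M + al + be.
Proof. by rewrite E2 part cc_u. Qed.

Lemma Mpos : 0 < M. Proof. exact: xpos. Qed.

Lemma I1 : r ^+ 2 <= m%:R + CN / 2.
Proof.
have h1 : al <= CN * M.
  rewrite /CN mulr_suml; apply: ler_sum => v _.
  rewrite mulrA ler_wpM2l ?mulr_ge0 ?a_ge0 ?cc_ge0 //.
have h2 : be <= K * M.
  rewrite /K mulr_suml; apply: ler_sum => v _.
  rewrite mulrA ler_wpM2l ?mulr_ge0 ?wI_ge0 ?cc_ge0 //.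
have hD : 0 <= D by rewrite /D sumr_ge0 // => w _; rewrite mulr_ge0 ?wI_ge0 // sumr_ge0 // => y _; rewrite mulr_ge0 ?a_ge0 ?wI_ge0.
have hm := M1. rewrite natrM in hm.
have Mp := Mpos.
have : r ^+ 2 * M <= (m%:R + CN / 2) * M.
  rewrite E2s; nra.
by rewrite ler_pM2r.
Qed.


Lemma D_ge0 : 0 <= D.
Proof.
by rewrite /D sumr_ge0 // => w _; rewrite mulr_ge0 ?wI_ge0 // sumr_ge0 // => y _; rewrite mulr_ge0 ?a_ge0 ?wI_ge0.
Qed.

Lemma CN_big : 9%:R < CN.
Proof. have := I1; have := hr; have := hr6; lra. Qed.

Lemma not_all_le1 : (forall v, e u v -> (cNs v <= 1)%N) -> False.
Proof.
move=> h1.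
have h2 : be <= K * M.
  rewrite /K mulr_suml; apply: ler_sum => v _.
  rewrite mulrA ler_wpM2l ?mulr_ge0 ?wI_ge0 ?cc_ge0 //.
have h3 : al - \sum_v adj u v * x v <= 0.
  rewrite /al -sumrB; apply: sumr_le0 => v _.
  rewrite /adj; case: (boolP (e u v)) => huv /=; last by rewrite !mul0r subr0.
  rewrite !mul1r cc_nat; have := h1 v huv; rewrite -(ler_nat R) => h.
  have := xpos v; nra.
have hm := M1. rewrite natrM in hm.
have hD := D_ge0. have hC := CN_big.
have Mp := Mpos.
have : (r ^+ 2 - r) * M <= (m%:R - CN / 2) * M.
  rewrite -E1 in h3; rewrite mulrBl E2s; nra.
rewrite ler_pM2r // => h. move: hC h hr. lra.
Qed.

Definition sv (v : 'I_n) : R := \sum_z wI z * (adj v z * x z).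

Lemma sv_ge0 v : 0 <= sv v.
Proof. by apply: sumr_ge0 => z _; rewrite !mulr_ge0 ?wI_ge0 ?a_ge0 ?ltW. Qed.

Lemma sumN_sv : \sum_v adj u v * sv v = be.
Proof.
rewrite /be /sv.
under eq_bigr do rewrite mulr_sumr.
rewrite exchange_big /=; apply: eq_bigr => z _.
rewrite /cc mulr_suml mulr_sumr; apply: eq_bigr => v _.
by rewrite (a_sym z v); ring.
Qed.

Lemma rxv_le v : r * x v <= M + cc v * M + sv v.
Proof.
rewrite eig part; apply: lerD; first apply: lerD.
- by rewrite /M; have := a_le1 v u; have := xpos u; nra.
- rewrite /cc mulr_suml; apply: ler_sum => z _.
  by rewrite mulrA ler_wpM2l ?mulr_ge0 ?a_ge0 // /M.
- by [].
Qed.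

Lemma rxw_le w : r * x w <= dg w * M.
Proof.
rewrite eig /dg mulr_suml; apply: ler_sum => z _.
by rewrite ler_wpM2l ?a_ge0.
Qed.

Lemma final_contra :
  (forall v, e u v -> (cNs v <= 3)%N) ->
  (\sum_v (e u v : nat) * (cNs v * (1 + cNs v)) <= 48)%N ->
  (forall w, w != u -> ~~ e u w -> (cNs w <= 2)%N) -> False.
Proof.
move=> h3 h48 h2.
have Mp := Mpos.
have F2 : r * al <= 48%:R * M + 3%:R * be.
  have H48 : \sum_v adj u v * (cc v * (1 + cc v)) <= 48%:R.
    rewrite -(ler_nat R) natr_sum in h48; apply: le_trans h48.
    by rewrite le_eqVlt; apply/orP; left; apply/eqP; apply: eq_bigr => v _;
      rewrite cc_nat /adj !natrM natrD.
  rewrite -sumN_sv /al [r * _]mulr_sumr.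
  apply: (@le_trans _ _ (\sum_v (adj u v * (cc v * (1 + cc v)) * M + 3%:R * (adj u v * sv v)))).
    apply: ler_sum => v _.
    rewrite /adj; case: (boolP (e u v)) => huv /=; last by rewrite /= !(mul0r, mulr0, addr0).
    rewrite !mul1r.
    have hc : cc v <= 3%:R by rewrite cc_nat ler_nat h3.
    have hc0 := cc_ge0 v.
    have := rxv_le v; have := sv_ge0 v; nra.
  by rewrite big_split /= -mulr_suml -mulr_sumr lerD2r ler_pM2r.
have F3 : r * be <= 2%:R * (K + D) * M.
  rewrite /be /K /D -big_split /= [r * _]mulr_sumr mulr_sumr mulr_suml.
  apply: ler_sum => w _.
  rewrite /wI; case: (boolP ((w != u) && ~~ e u w)) => /= hw; last by rewrite /= !(mul0r, mulr0, addr0).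
  case/andP: hw => hw1 hw2.
  rewrite !mul1r.
  have hc : cc w <= 2%:R by rewrite cc_nat ler_nat h2.
  have hc0 := cc_ge0 w.
  have hk : 0 <= kk w by apply: sumr_ge0 => y _; rewrite mulr_ge0 ?a_ge0 ?wI_ge0.
  have hwu : adj w u = 0 by rewrite /adj esym (negbTE hw2).
  have := rxw_le w; rewrite dg_split hwu add0r => h.
  have h' := ler_wpM2l hc0 h.
  have h'' : 0 <= (2%:R - cc w) * ((cc w + kk w) * M).
    apply: mulr_ge0; [by rewrite subr_ge0 | apply: mulr_ge0; [exact: addr_ge0 | exact: ltW]].
  nra.
have h1 : al <= CN * M.
  rewrite /CN mulr_suml; apply: ler_sum => v _.
  rewrite mulrA ler_wpM2l ?mulr_ge0 ?a_ge0 ?cc_ge0 //.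
have hm := M1. rewrite natrM in hm.
have hD := D_ge0.
have hK : 0 <= K by apply: sumr_ge0 => w _; rewrite mulr_ge0 ?wI_ge0 ?cc_ge0.
have hbe : 0 <= be by apply: sumr_ge0 => w _; rewrite !mulr_ge0 ?wI_ge0 ?cc_ge0 ?ltW.
have F1 : (2%:R * r + 2%:R * K + D - 4%:R) * M <= al + 2%:R * be.
  have h0 : (m%:R - 2) * M <= r ^+ 2 * M - r * M by rewrite -mulrBl ler_pM2r.
  rewrite E2s in h0.
  have hmM : 2%:R * m%:R * M = (2 * d + CN + 2 * K + D) * M by rewrite hm.
  nra.
have G : r ^+ 2 * ((2%:R * r + 2%:R * K + D - 4%:R) * M) <= 48%:R * r * M + 2%:R * (3%:R + 2%:R * r) * (K + D) * M.
  have rp : 0 < r by move: hr6; lra.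
  apply: (le_trans (ler_wpM2l (ltW (exprn_gt0 2 rp)) F1)).
  nra.
have : (r ^+ 2 * (2%:R * r + 2%:R * K + D - 4%:R)) * M <= (48%:R * r + 2%:R * (3%:R + 2%:R * r) * (K + D)) * M.
  have e1 : r ^+ 2 * ((2%:R * r + 2%:R * K + D - 4%:R) * M) = (r ^+ 2 * (2%:R * r + 2%:R * K + D - 4%:R)) * M by ring.
  have e2 : 48%:R * r * M + 2%:R * (3%:R + 2%:R * r) * (K + D) * M = (48%:R * r + 2%:R * (3%:R + 2%:R * r) * (K + D)) * M by ring.
  by rewrite -e1 -e2.
rewrite ler_pM2r // => H.
have rr := hr6.
have q0 : 0 <= r ^+ 2 - 2%:R * r - 3%:R by move: rr; nra.
have q0' : 0 <= r ^+ 2 - 4%:R * r - 6%:R by move: rr; nra.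
have q0'' : 0 < 2%:R * r ^+ 2 - 4%:R * r - 48%:R by move: rr; nra.
have q1 := mulr_ge0 q0 hK.
have q2 := mulr_ge0 q0' hD.
have q3 : 0 < r * (2%:R * r ^+ 2 - 4%:R * r - 48%:R) by apply: mulr_gt0 => //; move: rr; lra.
move: H q1 q2 q3; nra.
Qed.

End Spectral.

End SpectralS.

Section Comb.
Variables (n : nat) (e : rel 'I_n) (u : 'I_n).
Hypotheses (esym : symmetric e) (eirr : irreflexive e) (hfree : H43_free e).

Ltac neqt := apply/negP => /eqP ?; subst; try done;
  match goal with
  | H : is_true (e ?z ?z) |- _ => by rewrite eirr in H
  | H : is_true (?z != ?z) |- _ => by rewrite eqxx in H
  | H : is_true (~~ ?b), H' : is_true ?b |- _ => by rewrite H' in H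
  end.
Ltac uniqt := rewrite /= ?inE ?negb_or ?andbT; repeat (apply/andP; split); try neqt.

Definition NS (v : 'I_n) := [set w in nbhd e u | e v w].
Definition cN (v : 'I_n) : nat := #|NS v|.
Definition Ap := A_plus e u.

Lemma inNS v w : (w \in NS v) = e u w && e v w.
Proof. by rewrite /NS !inE. Qed.
Lemma inAp v : (v \in Ap) = e u v && (0 < cN v)%N.
Proof. by rewrite /Ap /A_plus !inE. Qed.

Lemma BAN p q a b c : e u p -> e u q -> e u a -> e u b -> e u c ->
  p != q -> p != a -> p != b -> p != c -> q != a -> q != b -> q != c ->
  a != b -> a != c -> b != c ->
  e p q -> e a b -> e b c -> False.
Proof.
move=> up uq ua ub uc ? ? ? ? ? ? ? ? ? ? pq ab bc.
apply: hfree; apply: (@H43_of _ _ esym u a b c p q); rewrite ?(esym c) ?(esym q) //.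
uniqt.
Qed.

Lemma HW ya yb w p q : e u ya -> e u yb -> e u p -> e u q -> w != u -> ~~ e u w ->
  e w ya -> e w yb -> e p q -> ya != yb -> ya != p -> ya != q -> yb != p -> yb != q ->
  False.
Proof.
move=> uya uyb up uq wu nuw wya wyb pq ? ? ? ? ?.
apply: hfree; apply: (@H43_of _ _ esym u ya w yb p q); rewrite ?(esym ya) ?(esym yb) ?(esym q) //.
uniqt.
Qed.


Lemma NS_sub v : e u v -> NS v \subset Ap :\ v.
Proof.
move=> uv; apply/subsetP => w; rewrite inNS => /andP [uw vw].
rewrite !inE; apply/andP; split; first by apply/eqP => E; subst; rewrite eirr in vw.
rewrite uw /=; apply/card_gt0P; exists v; by rewrite !inE uv esym.
Qed.

Lemma cN_le v : e u v -> (cN v <= #|Ap|.-1)%N.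
Proof.
move=> uv; have := subset_leq_card (NS_sub uv).
case: (boolP (v \in Ap)) => hv; first by rewrite (cardsD1 v Ap) hv.
move: hv; rewrite inAp uv /= -eqn0Ngt => /eqP ->; by [].
Qed.

Lemma sum_Ap_bound (k : nat) (F : 'I_n -> nat) :
  (forall v, e u v -> (0 < cN v)%N -> (F v <= k)%N) ->
  (forall v, cN v = 0%N -> F v = 0%N) ->
  (\sum_v (e u v : nat) * F v <= #|Ap| * k)%N.
Proof.
move=> h1 h0.
rewrite -sum1_card big_distrl /= [X in (_ <= X)%N]big_mkcond /=; apply: leq_sum => v _.
rewrite inAp.
case: (boolP (e u v)) => uv //=.
case: (posnP (cN v)) => c0 /=; first by rewrite h0.
by rewrite !mul1n h1.
Qed.

Lemma Ap_ge4 : (10 <= \sum_v (e u v : nat) * cN v)%N -> (4 <= #|Ap|)%N.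
Proof.
move=> h.
have := @sum_Ap_bound (#|Ap|.-1) cN (fun v uv _ => cN_le uv) (fun v h => h).
move=> h2; have := leq_trans h h2.
case: #|Ap| => [|[|[|[|k]]]] //.
Qed.


Lemma get3 (S : {set 'I_n}) : (2 < #|S|)%N ->
  exists y1 y2 y3, [/\ y1 \in S, y2 \in S, y3 \in S & [/\ y1 != y2, y1 != y3 & y2 != y3]].
Proof.
move=> h.
have [y1 hy1] : exists y, y \in S by apply/card_gt0P; apply: leq_trans h.
have : (1 < #|S :\ y1|)%N by move: h; rewrite (cardsD1 y1 S) hy1.
case/card_gt1P => y2 [y3 []]; rewrite !inE => /andP [h2 h2'] /andP [h3 h3'] h23.
exists y1, y2, y3; split => //; split => //; by rewrite eq_sym.
Qed.

Lemma card_minus3 (A : {set 'I_n}) (a b c : 'I_n) : (4 <= #|A|)%N ->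
  exists y, [/\ y \in A, y != a, y != b & y != c].
Proof.
move=> h.
pose S := [set y | y \in [:: a; b; c]].
have hS : (#|S| <= 3)%N by rewrite cardsE; apply: (leq_trans (card_size _)).
have : (0 < #|A :\: S|)%N.
  move: h; rewrite -(cardsID S A) => h.
  have : (#|A :&: S| <= 3)%N by apply: leq_trans hS; apply: subset_leq_card; apply: subsetIr.
  move=> h2; move: h h2; set x := #|A :&: S|; set y := #|A :\: S|; lia.
case/card_gt0P => y; rewrite !inE negb_or negb_or => /andP [/and3P [ya yb yc] yA].
by exists y.
Qed.

Definition P4 p1 p2 p3 p4 : Prop := e u p1 /\ e u p2 /\ e u p3 /\ e u p4 /\
  p1 != p2 /\ p1 != p3 /\ p1 != p4 /\ p2 != p3 /\ p2 != p4 /\ p3 != p4 /\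
  e p1 p2 /\ e p2 p3 /\ e p3 p4.

Lemma P4_case p1 p2 p3 p4 : P4 p1 p2 p3 p4 ->
  (forall v, e u v -> (cN v <= 3)%N) /\
  (\sum_v (e u v : nat) * (cN v * (1 + cN v)) <= 48)%N /\
  (forall w, w != u -> ~~ e u w -> (cN w <= 2)%N).
Proof.
case=> [u1 [u2 [u3 [u4 [d12 [d13 [d14 [d23 [d24 [d34 [e12 [e23 e34]]]]]]]]]]]].
have e21 : e p2 p1 by rewrite esym.
have sub : Ap \subset [set x | x \in [:: p1; p2; p3; p4]].
  apply/subsetP => z; rewrite inAp => /andP [uz /card_gt0P [z' hz']].
  move: hz'; rewrite inNS => /andP [uz' zz'].
  rewrite inE; apply/negPn/negP; rewrite !inE !negb_or => /and4P [z1 z2 z3 z4].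
  case: (eqVneq z' p1) => [?|n1]; first by subst; apply: (@BAN z p1 p2 p3 p4) => //; neqt.
  case: (eqVneq z' p2) => [?|n2]; first by subst; apply: (@BAN p3 p4 z p2 p1) => //; neqt.
  case: (eqVneq z' p3) => [?|n3]; first by subst; apply: (@BAN p1 p2 z p3 p4) => //; neqt.
  case: (eqVneq z' p4) => [?|n4]; first by subst; apply: (@BAN z p4 p1 p2 p3) => //; neqt.
  by apply: (@BAN z z' p1 p2 p3) => //; neqt.
have Ale : (#|Ap| <= 4)%N.
  apply: (leq_trans (subset_leq_card sub)); rewrite cardsE; exact: card_size.
have Ale' : (#|Ap|.-1 <= 3)%N by move: Ale; case: #|Ap| => [|k].
have c3 : forall v, e u v -> (cN v <= 3)%N by move=> v uv; apply: (leq_trans (cN_le uv)).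
split; first exact: c3.
split.
  apply: (leq_trans (@sum_Ap_bound 12 (fun v => cN v * (1 + cN v))%N _ _)).
  - move=> v uv _; move: (c3 v uv); case: (cN v) => [|[|[|[|k]]]] //.
  - by move=> v ->.
  - by apply: (leq_trans (leq_mul Ale (leqnn 12))).
move=> w wu nuw; rewrite leqNgt; apply/negP => /get3 [y1 [y2 [y3 [hy1 hy2 hy3 [d1 d2 d3]]]]].
move: hy1 hy2 hy3; rewrite !inNS => /andP [uy1 wy1] /andP [uy2 wy2] /andP [uy3 wy3].
have hL : forall y, (y == p3) || (y == p4) -> (y != p1) && (y != p2).
  move=> y /orP [] /eqP ->; apply/andP; split; by rewrite eq_sym.
have d21 : y2 != y1 by rewrite eq_sym.
have e43 : e p4 p3 by rewrite esym.
case: (boolP ((y1 == p3) || (y1 == p4))) => s1;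
case: (boolP ((y2 == p3) || (y2 == p4))) => s2;
case: (boolP ((y3 == p3) || (y3 == p4))) => s3;
rewrite ?negb_or in s1 s2 s3;
try (case/hL/andP: s1 => ??); try (case/hL/andP: s2 => ??); try (case/hL/andP: s3 => ??);
try (case/andP: s1 => ??); try (case/andP: s2 => ??); try (case/andP: s3 => ??).
- by apply: (@HW y1 y2 w p1 p2).
- by apply: (@HW y1 y2 w p1 p2).
- by apply: (@HW y1 y3 w p1 p2).
- by apply: (@HW y2 y3 w p3 p4).
- by apply: (@HW y2 y3 w p1 p2).
- by apply: (@HW y1 y3 w p3 p4).
- by apply: (@HW y1 y2 w p3 p4).
- by apply: (@HW y1 y2 w p3 p4).
Qed.

Lemma comb_main :
  (10 <= \sum_v (e u v : nat) * cN v)%N ->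
  (exists c, e u c && (1 < cN c)%N) ->
  ~ ((forall v, e u v -> (cN v <= 3)%N) /\ (\sum_v (e u v : nat) * (cN v * (1 + cN v)) <= 48)%N /\ (forall w, w != u -> ~~ e u w -> (cN w <= 2)%N)) ->
  exists t, (1 <= t)%N /\ induced_iso e Ap (@star_rel t).
Proof.
move=> hCN [c /andP [uc c2]] hnot.
have A4 := Ap_ge4 hCN.
have [a1 [a2 [ha1 ha2 a12]]] := card_gt1P c2.
move: ha1 ha2; rewrite !inNS => /andP [ua1 ca1] /andP [ua2 ca2].
case: (classic (exists p1 p2 p3 p4, P4 p1 p2 p3 p4)) => [[p1 [p2 [p3 [p4 hP]]]] | noP4].
  by case: hnot; apply: (P4_case hP).
have mkP4 : forall p1 p2 p3 p4, e u p1 -> e u p2 -> e u p3 -> e u p4 ->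
    p1 != p2 -> p1 != p3 -> p1 != p4 -> p2 != p3 -> p2 != p4 -> p3 != p4 ->
    e p1 p2 -> e p2 p3 -> e p3 p4 -> False.
  move=> p1 p2 p3 p4 h1 h2 h3 h4 h5 h6 h7 h8 h9 h10 h11 h12 h13; apply: noP4.
  by exists p1, p2, p3, p4; do 12! (split; first done).
have S1 : forall a z, e u a -> e c a -> e u z -> e a z -> z = c.
  move=> a z ua ca uz az; apply/eqP; apply/negPn/negP => zc.
  have [b [ub cb ba]] : exists b, [/\ e u b, e c b & b != a].
    case: (eqVneq a1 a) => [?|h]; last by exists a1.
    subst; exists a2; split => //; by rewrite eq_sym.
  have ac : e a c by rewrite esym.
  case: (boolP (e c z)) => cz.
    have [y [yA ya yc yz]] := card_minus3 a c z A4.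
    move: yA; rewrite inAp => /andP [uy /card_gt0P [y' ]]; rewrite inNS => /andP [uy' yy'].
    case: (eqVneq y' a) => [?|n1]; first by subst; apply: (mkP4 y a c z) => //; neqt.
    case: (eqVneq y' c) => [?|n2]; first by subst; apply: (mkP4 y c a z) => //; neqt.
    case: (eqVneq y' z) => [?|n3].
      have zc' : e z c by rewrite esym.
      by subst; apply: (mkP4 y z c a) => //; neqt.
    by apply: (@BAN y y' a c z) => //; neqt.
  have za : e z a by rewrite esym.
  by apply: (mkP4 z a c b) => //; neqt.
have S2 : forall p q, e u p -> e u q -> e p q -> (p == c) || (q == c).
  move=> p q up uq pq; case: (eqVneq p c) => // pc; case: (eqVneq q c) => // qc /=.
  case: (boolP (e c p)) => cp; first by move: qc; rewrite (S1 p q up cp uq pq) eqxx.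
  have qp : e q p by rewrite esym.
  case: (boolP (e c q)) => cq; first by move: pc; rewrite (S1 q p uq cq up qp) eqxx.
  have a1c : e a1 c by rewrite esym.
  by exfalso; apply: (@BAN p q a1 c a2) => //; neqt.
pose L := NS c.
have Lc : forall v, v \in L -> (e u v) && (e c v) by move=> v; rewrite inNS.
have sz : size (enum L) = cN c by rewrite /cN -cardE.
pose f := fun i : 'I_(cN c).+1 => if val i is k.+1 then nth c (enum L) k else c.
have fL : forall k, (k < cN c)%N -> nth c (enum L) k \in L.
  by move=> k hk; rewrite -mem_enum mem_nth // sz.
exists (cN c); split; first by apply: ltnW.
exists f; split.
- move=> [[|i] hi] [[|j] hj] /=; rewrite /f /=.
  + by move=> _; apply: val_inj.
  + move=> E; have := fL j hj; rewrite -E => /Lc /andP [_]; by rewrite eirr.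
  + move=> E; have := fL i hi; rewrite E => /Lc /andP [_]; by rewrite eirr.
  + move=> E; apply: val_inj => /=; congr S.
    by apply/eqP; rewrite -(nth_uniq c _ _ (enum_uniq L)) ?E ?sz.
- move=> v; split.
  + rewrite inAp => /andP [uv /card_gt0P [v' ]]; rewrite inNS => /andP [uv' vv'].
    case: (eqVneq v c) => [->|vc]; first by exists ord0.
    have := S2 v v' uv uv' vv'; rewrite (negbTE vc) /= => /eqP E; subst v'.
    have vL : v \in enum L by rewrite mem_enum inNS uv esym.
    have hi : ((index v (enum L)).+1 < (cN c).+1)%N by rewrite ltnS -sz index_mem.
    exists (Ordinal hi); by rewrite /f /= nth_index.
  + move=> [[[|k] hk] <-]; rewrite /f /=.
      by rewrite inAp uc; apply: leq_trans c2.
    have := fL k hk => /Lc /andP [uw cw].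
    rewrite inAp uw /=; apply/card_gt0P; exists c; by rewrite inNS uc esym.
- move=> [[|i] hi] [[|j] hj]; rewrite /f /star_rel /=.
  + by rewrite eirr.
  + by have := fL j hj => /Lc /andP [_ ->].
  + by have := fL i hi => /Lc /andP [_]; rewrite esym => ->.
  + have := fL i hi => /Lc /andP [ui ci]; have := fL j hj => /Lc /andP [uj cj].
    apply/negbTE/negP => hij; have := S2 _ _ ui uj hij.
    by case/orP => /eqP E; [move: ci | move: cj]; rewrite E eirr.
Qed.

End Comb.

Lemma bk_edges (t : nat) : num_edges (bk t) = (2 * t + 2)%N.
Proof.
have h := @handshake _ (bk t) (@bk_sym t) (@bk_irr t).
have h2 : (\sum_(i < t.+4) #|[set j | bk t i j]| = \sum_(i < t.+4) degN t i)%N.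
  by apply: eq_bigr => i _; rewrite cardsE -sum_ind.
rewrite h2 (split5N t (degN t)) !degN_val // in h.
rewrite (@mid_sumN t _ 2) in h; last first.
  move=> j hj; rewrite degN_val; last by lia.
  by rewrite ifF ?ifT //; lia.
move: h; rewrite /= ltnn (_ : (t.+2 < t.+1)%N = false); last by lia.
lia.
Qed.

Section BkSpec.
Variable R : realType.
Local Open Scope ring_scope.

Definition r0 (t : nat) : R := (1 + Num.sqrt (1 + 8%:R * t%:R)) / 2.

Lemma r0_eq t : r0 t ^+ 2 - r0 t = 2%:R * t%:R.
Proof.
have h0 : 0 <= 1 + 8%:R * t%:R :> R by rewrite addr_ge0 ?mulr_ge0 ?ler0n.
have hs := sqr_sqrtr h0.
rewrite /r0; set s := Num.sqrt _ in hs *.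
have -> : ((1 + s) / 2) ^+ 2 - (1 + s) / 2 = (s ^+ 2 - 1) / 4%:R :> R.
  by field; rewrite ?pnatr_eq0.
by rewrite hs; field; rewrite ?pnatr_eq0.
Qed.

Lemma r0_ge1 t : 1 <= r0 t.
Proof.
have h0 : 0 <= 1 + 8%:R * t%:R :> R by rewrite addr_ge0 ?mulr_ge0 ?ler0n.
have hs := sqr_sqrtr h0.
have hs0 : 0 <= Num.sqrt (1 + 8%:R * t%:R) :> R := sqrtr_ge0 _.
rewrite /r0; set s := Num.sqrt _ in hs hs0 *.
have ht : 0 <= t%:R :> R by rewrite ler0n.
have s1 : 1 <= s by nra.
lra.
Qed.

Definition gv (r K : R) t (j : nat) : R :=
  if (j <= 1)%N then 1 else if (j <= t.+1)%N then 2 / r else K.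

Lemma split5R t (F : nat -> R) :
  \sum_(i < t.+4) F i = F 0%N + F 1%N + \sum_(2 <= i < t.+2) F i + F t.+2 + F t.+3.
Proof.
rewrite -(big_mkord xpredT F) big_ltn // big_ltn // big_nat_recr //= big_nat_recr //=.
by rewrite !addrA.
Qed.

Lemma rowsum t (r K : R) (i : nat) : (i < t.+4)%N ->
  \sum_(j < t.+4) (bkn t i j)%:R * gv r K t j =
  if (i <= 1)%N then 1 + t%:R * (2 / r) else if (i <= t.+1)%N then 2 else K.
Proof.
move=> hi.
rewrite (split5R t (fun j => (bkn t i j)%:R * gv r K t j)) /=.
have g0 : gv r K t 0 = 1 by [].
have g1 : gv r K t 1 = 1 by [].
have g2 : gv r K t t.+2 = K by rewrite /gv ifF ?ifF //; lia.
have g3 : gv r K t t.+3 = K by rewrite /gv ifF ?ifF //; lia.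
have gm : \sum_(2 <= j < t.+2) (bkn t i j)%:R * gv r K t j =
          (\sum_(2 <= j < t.+2) (bkn t i j : nat))%:R * (2 / r).
  rewrite natr_sum mulr_suml; apply: eq_big_nat => j hj.
  by rewrite /gv ifF ?ifT //; lia.
rewrite g0 g1 g2 g3 gm !mulr1.
have E : forall (a b c d k : nat), (bkn t i 0 + bkn t i 1 = a)%N -> (bkn t i t.+2 + bkn t i t.+3 = b)%N ->
  (forall j, (2 <= j < t.+2)%N -> (bkn t i j : nat) = k) ->
  (bkn t i 0)%:R + (bkn t i 1)%:R + (\sum_(2 <= j < t.+2) (bkn t i j : nat))%:R * (2 / r)
   + (bkn t i t.+2)%:R * K + (bkn t i t.+3)%:R * K = a%:R + (t * k)%:R * (2 / r) + b%:R * K.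
  move=> a b c d k ha hb hk; rewrite (mid_sumN hk) -ha -hb !natrD; ring.
case: (boolP (i <= 1)%N) => h1.
  rewrite (E 1%N 0%N 0%N 0%N 1%N); first by rewrite muln1; ring.
  - by move: h1; rewrite /bkn; lia.
  - by move: h1; rewrite /bkn; lia.
  - by move=> j hj; move: h1 hj; rewrite /bkn; case: (bkn t i j); lia.
case: (boolP (i <= t.+1)%N) => h2.
  rewrite (E 2%N 0%N 0%N 0%N 0%N); first by rewrite muln0; ring.
  - by move: h1 h2; rewrite /bkn; lia.
  - by move: h1 h2; rewrite /bkn; lia.
  - by move=> j hj; move: h1 h2 hj; rewrite /bkn; lia.
rewrite (E 0%N 1%N 0%N 0%N 0%N); first by rewrite muln0; ring.
- by move: h1 h2 hi; rewrite /bkn; lia.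
- by move: h1 h2 hi; rewrite /bkn; lia.
- by move=> j hj; move: h1 h2 hj hi; rewrite /bkn; lia.
Qed.

Lemma bk_spec t : spectral_radius (bk t) (r0 t).
Proof.
have hr := r0_eq t. have h1 := r0_ge1 t.
have rn0 : r0 t != 0 by apply/eqP => E; rewrite E in h1; lra.
have rowsym : forall (K : R) (j : 'I_t.+4), \sum_(i < t.+4) gv (r0 t) K t i * (bk t i j)%:R =
    if (j <= 1)%N then 1 + t%:R * (2 / r0 t) else if (j <= t.+1)%N then 2 else K.
  move=> K j; rewrite -(rowsum (r0 t) K (ltn_ord j)); apply: eq_bigr => i _.
  by rewrite /bk bkn_sym mulrC.
have ht : t%:R * (2 / r0 t) = r0 t - 1.
  by apply: (mulIf rn0); rewrite -mulrA mulfVK // mulrBl mul1r -expr2 hr; ring.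
split.
  apply/eigenvalueP; exists (\row_j gv (r0 t) 0 t j).
    apply/rowP => j; rewrite !mxE.
    rewrite (eq_bigr (fun i : 'I_t.+4 => gv (r0 t) 0 t i * (bk t i j)%:R)); last first.
      by move=> i _; rewrite !mxE.
    rewrite rowsym /gv.
    case: (j <= 1)%N; first by rewrite ht mulr1; ring.
    case: (j <= t.+1)%N; last by rewrite mulr0.
    by rewrite mulrC mulfVK.
  apply/eqP => /rowP /(_ ord0); rewrite !mxE /gv /= => /eqP; by rewrite oner_eq0.
move=> mu hmu.
apply: (@cw_bound R _ (bk t) (@bk_sym t) (fun j => gv (r0 t) 1 t j)) => //.
  move=> i; rewrite /gv; case: (i <= 1)%N => //; case: (i <= t.+1)%N => //.
  by rewrite divr_gt0 //; lra.
move=> i; rewrite /bk (rowsum (r0 t) 1 (ltn_ord i)) /gv.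
case: (i <= 1)%N; first by rewrite ht mulr1; lra.
case: (i <= t.+1)%N; last by lra.
by rewrite mulrC mulfVK.
Qed.

End BkSpec.

Unset Implicit Arguments.
Local Open Scope ring_scope.

Theorem mainTheorem7 (R : realType) (m n : nat) (e : rel 'I_n)
    (x : 'cV[R]_n) (u : 'I_n) :
  (38 <= m)%N -> ~~ odd m ->
  extremal R m e ->
  perron_vector e x ->
  (forall v : 'I_n, x v 0 <= x u 0) ->
  exists t : nat, (1 <= t)%N /\ induced_iso e (A_plus e u) (@star_rel t).
Proof.
move=> hm38 hev [[[esym eirr] hfree hedges hnoiso] [re [hre hmax]]] [r [hr hAx xpos xnorm]] xmax.
have req : r = re.
  apply/eqP; rewrite eq_le; apply/andP; split.
  - exact: (hre.2 r hr.1).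
  - exact: (hr.2 re hre.1).
subst re.
set t := (m./2 - 1)%N.
have hm2 : m = (2 * t + 2)%N.
  have := odd_double_half m; rewrite (negbTE hev) add0n -mul2n /t => h.
  move: h hm38; lia.
have adm : admissible m (bk t).
  split => //; [exact: (conj (@bk_sym t) (@bk_irr t)) | exact: (@bk_free t) | by rewrite bk_edges hm2 | exact: (@bk_noiso t)].
have r0le : r0 R t <= r := hmax _ _ _ adm (bk_spec R t).
have r01 := r0_ge1 R t.
have r0e := r0_eq R t.
have hrm : m%:R - 2 <= r ^+ 2 - r.
  have -> : m%:R - 2 = 2%:R * t%:R :> R by rewrite hm2 natrD natrM; ring.
  rewrite -r0e; nra.
have hr6 : 13%:R / 2 < r.
  have h36 : 36%:R <= m%:R - 2 :> R.
    have : (38%:R <= m%:R :> R) by rewrite ler_nat.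
    lra.
  nra.
have eig : forall i, r * x i 0 = \sum_j (e i j)%:R * x j 0.
  move=> i; have := congr1 (fun M : 'cV[R]_n => M i 0) hAx; rewrite !mxE => <-.
  by apply: eq_bigr => j _; rewrite mxE.
have hs : (\sum_i #|[set j | e i j]|)%N = (2 * m)%N by rewrite handshake // hedges.
pose xx := fun i => x i 0.
have CNb := @CN_big R n e u xx r m esym eirr xpos xmax eig hs hrm hr6.
have CNn : (10 <= \sum_v (e u v : nat) * cN e u v)%N.
  have : (9%:R : R) < (\sum_v (e u v : nat) * cN e u v)%N%:R.
    apply: (lt_le_trans CNb); rewrite natr_sum le_eqVlt; apply/orP; left; apply/eqP.
    by apply: eq_bigr => v _; rewrite cc_nat natrM.
  by rewrite ltr_nat.
have exc : exists c, e u c && (1 < cN e u c)%N.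
  case: (boolP [exists c, e u c && (1 < cN e u c)%N]) => [/existsP //|/existsPn H].
  exfalso; apply: (@not_all_le1 R n e u xx r m esym eirr xpos xmax eig hs hrm hr6) => v uv.
  by have := H v; rewrite uv /= -leqNgt.
have hn : ~ ((forall v, e u v -> (cN e u v <= 3)%N) /\
     (\sum_v (e u v : nat) * (cN e u v * (1 + cN e u v)) <= 48)%N /\
     (forall w, w != u -> ~~ e u w -> (cN e u w <= 2)%N)).
  move=> [h3 [h48 h2]].
  exact: (@final_contra R n e u xx r m esym eirr xpos xmax eig hs hrm hr6 h3 h48 h2).
exact: (comb_main esym eirr hfree CNn exc hn).
Qed.
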